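(* Let $G$ be a graph and $k$ an integer, and assume: (A) $G$ contains no two adjacent vertices $u,w$ with $N(w)\subseteq N[u]$; and (B) there is no vertex $w$ of $G$ together with a partition $(C_1,C_2)$ of $N(w)$ such that $|C_1|\ge|C_2|$, $C_1$ and $C_2$ are cliques, and every vertex $c_1\in C_1$ lies in exactly one pair $\{c_1,c_2\}$ with $c_2\in C_2$ and $\{c_1,c_2\}\notin E(G)$. Let $v$ be a vertex of degree four such that $G[N(v)]$ has at least three edges. Then $G[N(v)]$ is a path. Moreover, writing $N(v)=\{a,b,c,d\}$ so that $G[N(v)]$ is the path $a-b-c-d$, let $G'$ be the graph with vertex set $V(G)\setminus\{v\}$ whose edge set consists of the edges of $G-v$ together with the set $F$ consisting of all pairs of distinct vertices of $N(v)$, all pairs $\{x,y\}$ with $x\in\{a,b\}$ and $y\in N(d)$, and all pairs $\{x,y\}$ with $x\in\{c,d\}$ and $y\in N(a)$ (pairs containing $v$ being omitted). Then $G$ has a vertex cover of size $k$ if and only if $G'$ has a vertex cover of size $k$.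
   Context: All graphs are finite, simple, undirected. $N(x)$ is the open and $N[x]=N(x)\cup\{x\}$ the closed neighborhood; $G[X]$ is the subgraph induced by $X$. A clique is a set of pairwise adjacent vertices. A vertex cover is a set of vertices containing at least one endpoint of every edge; ''has a vertex cover of size $k$'' means has a vertex cover of size at most $k$. *)

(* Defs.v *)
From mathcomp Require Import all_boot all_order all_algebra.
Set Implicit Arguments. Unset Strict Implicit. Unset Printing Implicit Defensive.
Import GRing.Theory Num.Theory.

Definition simple_graph (T : finType) (e : rel T) : Prop :=
  symmetric e /\ irreflexive e.

Definition nbh (T : finType) (e : rel T) (x : T) : {set T} := [set y | e x y].
Definition cnbh (T : finType) (e : rel T) (x : T) : {set T} := x |: nbh e x.

Definition is_clique (T : finType) (e : rel T) (C : {set T}) : Prop :=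
  forall x y, x \in C -> y \in C -> x != y -> e x y.

Definition is_vertex_cover (T : finType) (e : rel T) (S : {set T}) : Prop :=
  forall x y, e x y -> (x \in S) || (y \in S).
Definition has_vc (T : finType) (e : rel T) (k : int) : Prop :=
  exists S : {set T}, is_vertex_cover e S /\ (#|S|%:Z <= k)%R.

Definition condA (T : finType) (e : rel T) : Prop :=
  ~ exists u w, e u w /\ nbh e w \subset cnbh e u.

Definition condB (T : finType) (e : rel T) : Prop :=
  ~ exists w (C1 C2 : {set T}),
      [/\ [/\ C1 :|: C2 = nbh e w, [disjoint C1 & C2] & #|C2| <= #|C1|],
          is_clique e C1, is_clique e C2 &
          forall c1, c1 \in C1 -> #|[set c2 in C2 | ~~ e c1 c2]| = 1].

Definition induced_edges (T : finType) (e : rel T) (X : {set T}) : nat :=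
  #|[set [set x; y] | x in X, y in X & e x y]|.

Definition induced_P4 (T : finType) (e : rel T) (X : {set T}) (a b c d : T) : Prop :=
  [/\ uniq [:: a; b; c; d], X = [set a; b; c; d],
      [/\ e a b, e b c & e c d] & [/\ ~~ e a c, ~~ e a d & ~~ e b d]].

Definition is_path_graph_induced (T : finType) (e : rel T) (X : {set T}) : Prop :=
  exists a b c d, induced_P4 e X a b c d.

Definition Fpair (T : finType) (e : rel T) (v a b c d : T) (x y : T) : bool :=
  [|| (x \in nbh e v) && (y \in nbh e v),
      (x \in [set a; b]) && (y \in nbh e d),
      (y \in [set a; b]) && (x \in nbh e d),
      (x \in [set c; d]) && (y \in nbh e a)
    | (y \in [set c; d]) && (x \in nbh e a)].

Definition Vminus (T : finType) (v : T) : finType := {x : T | x != v}.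

Definition Gprime_rel (T : finType) (e : rel T) (v a b c d : T) : rel (Vminus v) :=
  fun x y => (val x != val y) && (e (val x) (val y) || Fpair e v a b c d (val x) (val y)).
Arguments Gprime_rel {T} e v a b c d.

(* Main.v *)
Require Import Defs.
From mathcomp Require Import all_boot all_order all_algebra.
Set Implicit Arguments. Unset Strict Implicit. Unset Printing Implicit Defensive.
Import Order.TTheory GRing.Theory Num.Theory.

Lemma set2C (T : finType) (x y : T) : [set x; y] = [set y; x].
Proof. by apply/setP => z; rewrite !inE orbC. Qed.

Section P1.
Variables (T : finType) (e : rel T) (v : T).
Hypothesis esym : symmetric e.
Hypothesis eirr : irreflexive e.
Hypothesis hA : condA e.
Hypothesis hB : condB e.

Lemma noA p q r s : e p q -> e p r -> e p s -> nbh e v = [set p; q; r; s] -> False.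
Proof.
move=> pq pr ps HN; apply: hA; exists p, v; split.
  have : p \in nbh e v by rewrite HN !inE eqxx.
  by rewrite inE esym.
apply/subsetP => y; rewrite HN /cnbh !inE -!orbA.
by case/or4P => /eqP ->; rewrite ?eqxx ?pq ?pr ?ps ?orbT.
Qed.

Lemma noC4 p q r s : e p q -> e q r -> e r s -> e s p -> ~~ e p r -> ~~ e q s ->
  nbh e v = [set p; q; r; s] -> uniq [:: p; q; r; s] -> False.
Proof.
move=> pq qr rs sp pr qs HN U.
move: (U); rewrite /= !inE !negb_or => /and4P[/and3P[Dpq Dpr Dps] /andP[Dqr Dqs] Drs _].
apply: hB; exists v, [set p; q], [set r; s]; split.
- split.
  + rewrite HN; apply/setP => x; rewrite !inE.
    by case: (x == p); case: (x == q); case: (x == r); case: (x == s).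
  + rewrite disjoint_subset; apply/subsetP => x; rewrite !inE.
    by case/orP => /eqP ->; rewrite negb_or ?Dpr ?Dps ?Dqr ?Dqs.
  + by rewrite !cards2 Dpq Drs.
- move=> x y; rewrite !inE => /orP[]/eqP-> /orP[]/eqP->; rewrite ?eqxx // => _;
  by rewrite // esym.
- move=> x y; rewrite !inE => /orP[]/eqP-> /orP[]/eqP->; rewrite ?eqxx // => _;
  by rewrite // esym.
- move=> x; rewrite !inE => /orP[]/eqP->.
    rewrite (_ : [set _ in _ | _] = [set r]) ?cards1 //.
    apply/setP => y; rewrite !inE; case: (eqVneq y r) => [->|yr] /=; first by rewrite pr.
    by case: (eqVneq y s) => [->|//]; rewrite esym sp.
  rewrite (_ : [set _ in _ | _] = [set s]) ?cards1 //.
  apply/setP => y; rewrite !inE; case: (eqVneq y s) => [->|ys] /=; first by rewrite qs orbT.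
  by case: (eqVneq y r) => [->|//]; rewrite qr.
Qed.

Lemma noK3 p q r s : e p q -> e q r -> e p r -> ~~ e p s -> ~~ e q s -> ~~ e r s ->
  nbh e v = [set p; q; r; s] -> uniq [:: p; q; r; s] -> False.
Proof.
move=> pq qr pr ps qs rs HN U.
move: (U); rewrite /= !inE !negb_or => /and4P[/and3P[Dpq Dpr Dps] /andP[Dqr Dqs] Drs _].
apply: hB; exists v, [set p; q; r], [set s]; split.
- split.
  + by rewrite HN.
  + rewrite disjoint_subset; apply/subsetP => x; rewrite !inE.
    by case/orP => [/orP[]|] /eqP ->; rewrite ?Dps ?Dqs ?Drs.
  + by rewrite cards1 card_gt0; apply/set0Pn; exists p; rewrite !inE eqxx.
- move=> x y; rewrite !inE => /orP[/orP[]|]/eqP-> /orP[/orP[]|]/eqP->; rewrite ?eqxx // => _;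
    by rewrite ?pq ?qr ?pr // esym ?pq ?qr ?pr.
- by move=> x y; rewrite !inE => /eqP-> /eqP->; rewrite eqxx.
- move=> x hx; rewrite (_ : [set _ in _ | _] = [set s]) ?cards1 //.
  apply/setP => y; rewrite !inE; case: (eqVneq y s) => [->|//] /=.
  by move: hx; rewrite !inE => /orP[/orP[]|]/eqP->.
Qed.

Lemma P4ok p q r s : e p q -> e q r -> e r s -> ~~ e p r -> ~~ e p s -> ~~ e q s ->
  nbh e v = [set p; q; r; s] -> uniq [:: p; q; r; s] -> is_path_graph_induced e (nbh e v).
Proof. by move=> *; exists p, q, r, s; split. Qed.

Lemma count_edges p q r s : nbh e v = [set p; q; r; s] ->
  induced_edges e (nbh e v) <= e p q + e p r + e p s + e q r + e q s + e r s.
Proof.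
move=> HN.
pose f (x y : T) := if e x y then [set [set x; y]] else set0.
have cf : forall x y, #|f x y| <= e x y.
  by move=> x y; rewrite /f; case: (e x y); rewrite ?cards1 ?cards0.
pose U := f p q :|: f p r :|: f p s :|: f q r :|: f q s :|: f r s.
apply: (@leq_trans #|U|).
  apply: subset_leq_card; apply/subsetP => P /imset2P[x y hx].
  rewrite inE => /andP[hy exy] ->.
  rewrite HN !inE -!orbA in hx hy.
  move: exy; case/or4P: hx => /eqP -> ; case/or4P: hy => /eqP -> ;
  first [ by rewrite eirr
        | by move=> exy; rewrite /U /f !inE exy !inE eqxx /= ?orbT
        | by rewrite esym => exy; rewrite set2C /U /f !inE exy !inE eqxx /= ?orbT
        ].
rewrite /U.
do 5! (apply: leq_trans (leq_card_setU _ _) _; apply: leq_add; last exact: cf).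
exact: cf.
Qed.


Ltac seteq := apply/setP => z; rewrite !inE;
  by case: (_ == _); case: (_ == _); case: (_ == _); case: (_ == _).
Ltac edg := by repeat match goal with H : e _ _ = _ |- _ => rewrite H end.
Ltac unq := rewrite /= !inE !negb_or; by repeat match goal with H : is_true (_ != _) |- _ => rewrite H end.
Ltac sq := match goal with H : nbh e v = _ |- _ => rewrite H; seteq end.
Ltac tA a b c d := exfalso; apply: (@noA a b c d); [edg|edg|edg|sq].
Ltac tC a b c d := exfalso; apply: (@noC4 a b c d); [edg|edg|edg|edg|edg|edg|sq|unq].
Ltac tK a b c d := exfalso; apply: (@noK3 a b c d); [edg|edg|edg|edg|edg|edg|sq|unq].
Ltac tP a b c d := apply: (@P4ok a b c d); [edg|edg|edg|edg|edg|edg|sq|unq].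

Lemma part1 : #|nbh e v| = 4 -> 3 <= induced_edges e (nbh e v) ->
  is_path_graph_induced e (nbh e v).
Proof.
move=> h4 h3.
have [p [q [r [s [U HN]]]]] : exists p q r s, uniq [:: p; q; r; s] /\ nbh e v = [set p; q; r; s].
  have M := mem_enum (pred_of_set (nbh e v)); have Un := enum_uniq (pred_of_set (nbh e v)).
  rewrite cardE in h4.
  move: M Un h4; case: (enum _) => [|p [|q [|r [|s [|]]]]] //= M Un _.
  exists p, q, r, s; split => //.
  apply/setP => x; rewrite -M !inE.
  by case: (x == p); case: (x == q); case: (x == r); case: (x == s).
have C := leq_trans h3 (count_edges HN).
have D := U; move: D; rewrite /= !inE !negb_or => /and4P[/and3P[Dpq Dpr Dps] /andP[Dqr Dqs] Drs _].
have Dqp : q != p by rewrite eq_sym.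
have Drp : r != p by rewrite eq_sym.
have Dsp : s != p by rewrite eq_sym.
have Drq : r != q by rewrite eq_sym.
have Dsq : s != q by rewrite eq_sym.
have Dsr : s != r by rewrite eq_sym.
move: C (esym q p) (esym r p) (esym s p) (esym r q) (esym s q) (esym s r).
case Epq: (e p q); case Epr: (e p r); case Eps: (e p s);
case Eqr: (e q r); case Eqs: (e q s); case Ers: (e r s);
move=> C Eqp Erp Esp Erq Esq Esr;
first [ by move: C
      | tA p q r s | tA q p r s | tA r p q s | tA s p q r
      | tC p q r s | tC p q s r | tC p r q s
      | tK p q r s | tK p q s r | tK p r s q | tK q r s p
      | tP p q r s | tP p q s r | tP p r q s | tP p r s q | tP p s q r | tP p s r q
      | tP q p r s | tP q p s r | tP q r p s | tP q r s p | tP q s p r | tP q s r p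
      | tP r p q s | tP r p s q | tP r q p s | tP r q s p | tP r s p q | tP r s q p
      | tP s p q r | tP s p r q | tP s q p r | tP s q r p | tP s r p q | tP s r q p ].
Qed.

End P1.
Lemma int_le_trans (m n : nat) (k : int) : m <= n -> (n%:Z <= k)%R -> (m%:Z <= k)%R.
Proof. move=> h1 h2; apply: le_trans h2; by rewrite lez_nat. Qed.

Lemma card_swap (T : finType) (S : {set T}) (x v : T) : v \in S -> #|x |: (S :\ v)| <= #|S|.
Proof. by move=> vS; rewrite cardsU1 (cardsD1 v S) vS leq_add2r leq_b1. Qed.

Section VC.
Variables (T : finType) (e : rel T) (v a b c d : T).
Hypothesis esym : symmetric e.
Hypothesis eirr : irreflexive e.
Hypothesis Hu : uniq [:: a; b; c; d].
Hypothesis HN : nbh e v = [set a; b; c; d].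
Hypothesis Hab : e a b.
Hypothesis Hbc : e b c.
Hypothesis Hcd : e c d.
Hypothesis Hac : ~~ e a c.
Hypothesis Had : ~~ e a d.
Hypothesis Hbd : ~~ e b d.

Lemma inN x : (x \in nbh e v) = [|| x == a, x == b, x == c | x == d].
Proof. by rewrite HN !inE -!orbA. Qed.

Lemma nv x : x \in nbh e v -> x != v.
Proof. rewrite inE => h; apply/eqP => xv; by rewrite xv eirr in h. Qed.

Lemma aN : a \in nbh e v. Proof. by rewrite inN eqxx. Qed.
Lemma bN : b \in nbh e v. Proof. by rewrite inN eqxx !orbT. Qed.
Lemma cN : c \in nbh e v. Proof. by rewrite inN eqxx !orbT. Qed.
Lemma dN : d \in nbh e v. Proof. by rewrite inN eqxx !orbT. Qed.
Lemma av : a != v. Proof. exact: nv aN. Qed.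
Lemma bv : b != v. Proof. exact: nv bN. Qed.
Lemma cv : c != v. Proof. exact: nv cN. Qed.
Lemma dv : d != v. Proof. exact: nv dN. Qed.

Lemma ne_ad : a != d. Proof. by apply: contraNneq Hbd => <-; rewrite esym. Qed.
Lemma ne_bd : b != d.
Proof. by move: Hu; rewrite /= !inE !negb_or => /and4P[/and3P[_ _ _] /andP[_ ->]]. Qed.

Let Gp := Gprime_rel e v a b c d.

Lemma GtoGp (S1 : {set T}) :
  (forall x y, x != v -> y != v -> e x y -> (x \in S1) || (y \in S1)) ->
  (exists m, forall z, z \in nbh e v -> z != m -> z \in S1) ->
  (forall x y, x \in [set a; b] -> y \in nbh e d -> y != v -> (x \in S1) || (y \in S1)) ->
  (forall x y, x \in [set c; d] -> y \in nbh e a -> y != v -> (x \in S1) || (y \in S1)) ->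
  is_vertex_cover Gp [set x : Vminus v | val x \in S1].
Proof.
move=> H0 [m Hm] H2 H3 x y /andP[xy].
have xv := valP x; have yv := valP y.
rewrite !inE.
case/orP; first exact: H0.
rewrite /Fpair.
case/orP; first move=> /andP[hx hy].
  case: (eqVneq (val x) m) => [xm|xm]; last by rewrite Hm.
  by rewrite (Hm (val y)) ?orbT // -xm eq_sym.
case/orP; first by move=> /andP[hx hy]; apply: H2.
case/orP; first by move=> /andP[hx hy]; rewrite orbC; apply: H2.
case/orP; first by move=> /andP[hx hy]; apply: H3.
by move=> /andP[hx hy]; rewrite orbC; apply: H3.
Qed.

Lemma dir1 k : has_vc e k -> has_vc Gp k.
Proof.
case=> S [HS Hk].
have Hc : forall x y, e x y -> x \notin S -> y \in S.
  by move=> x y /HS /orP[->|].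
have inS1 : forall x z, z != v -> z \in S -> z \in x |: (S :\ v).
  by move=> x z zv zS; rewrite !inE zv zS orbT.
have H0 : forall x0, forall x y, x != v -> y != v -> e x y ->
   (x \in x0 |: (S :\ v)) || (y \in x0 |: (S :\ v)).
  move=> x0 x y xv yv /HS /orP[h|h]; first by rewrite inS1.
  by rewrite (inS1 _ y) ?orbT.
suff [S1 [H0' Hm H2 H3 Hcard]] : exists S1 : {set T}, [/\
  (forall x y, x != v -> y != v -> e x y -> (x \in S1) || (y \in S1)),
  (exists m, forall z, z \in nbh e v -> z != m -> z \in S1),
  (forall x y, x \in [set a; b] -> y \in nbh e d -> y != v -> (x \in S1) || (y \in S1)),
  (forall x y, x \in [set c; d] -> y \in nbh e a -> y != v -> (x \in S1) || (y \in S1)) &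
  #|S1| <= #|S|].
  exists [set x : Vminus v | val x \in S1]; split; first exact: GtoGp.
  apply: int_le_trans Hk; apply: leq_trans Hcard.
  rewrite -(card_imset _ val_inj); apply: subset_leq_card.
  by apply/subsetP => y /imsetP[x]; rewrite inE => hx ->.
have allN : forall S1 : {set T}, (forall z, z \in nbh e v -> z \in S1) ->
  [/\ (exists m, forall z, z \in nbh e v -> z != m -> z \in S1),
  (forall x y, x \in [set a; b] -> y \in nbh e d -> y != v -> (x \in S1) || (y \in S1)) &
  (forall x y, x \in [set c; d] -> y \in nbh e a -> y != v -> (x \in S1) || (y \in S1))].
  move=> S1 h; split.
  - by exists a => z zN _; apply: h.
  - move=> x y hx _ _; rewrite h //; move: hx; rewrite inN !inE.
    by case/orP=> ->; rewrite ?orbT.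
  - move=> x y hx _ _; rewrite h //; move: hx; rewrite inN !inE.
    by case/orP=> ->; rewrite ?orbT.
case vS: (v \in S); last first.
  have h : forall z, z \in nbh e v -> z \in S.
    by move=> z; rewrite inE => /Hc; rewrite vS; apply.
  have [h1 h2 h3] := allN S h.
  by exists S; split=> // x y _ _ /HS.
case aS: (a \in S); last first.
  have aN' : forall y, e a y -> y \in S by move=> y /Hc; rewrite aS; apply.
  have bS : b \in S by apply: aN'.
  exists (a |: (S :\ v)); split => //; first exact: H0.
  - exists (if c \in S then d else c) => z; rewrite inN.
    case/or4P => /eqP ->.
    + by rewrite !inE eqxx.
    + by rewrite inS1 // bv.
    + by case cS: (c \in S); rewrite ?eqxx // => _; rewrite inS1 // cv.
    + case cS: (c \in S); rewrite ?eqxx // => _; rewrite inS1 // ?dv //.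
      by apply: (Hc c); rewrite ?cS.
  - move=> x y; rewrite !inE => /orP[] /eqP -> _ _; first by rewrite eqxx.
    by rewrite bS bv orbT.
  - move=> x y _; rewrite inE => ay yv; rewrite (inS1 _ y) ?orbT //.
    exact: aN'.
  - exact: card_swap.
case dS: (d \in S); last first.
  have dN' : forall y, e d y -> y \in S by move=> y /Hc; rewrite dS; apply.
  have cS : c \in S by apply: dN'; rewrite esym.
  exists (d |: (S :\ v)); split => //; first exact: H0.
  - exists b => z; rewrite inN.
    case/or4P => /eqP ->; rewrite ?eqxx // => _.
    + by rewrite inS1 // av.
    + by rewrite inS1 // cv.
    + by rewrite !inE eqxx.
  - move=> x y _; rewrite inE => ay yv; rewrite (inS1 _ y) ?orbT //.
    exact: dN'.
  - move=> x y; rewrite !inE => /orP[] /eqP -> _ _; last by rewrite eqxx.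
    by rewrite cS cv orbT.
  - exact: card_swap.
pose x0 := if b \in S then c else b.
have h : forall z, z \in nbh e v -> z \in x0 |: (S :\ v).
  move=> z; rewrite inN; case/or4P => /eqP ->.
  + by rewrite inS1 // av.
  + rewrite /x0; case bS: (b \in S); first by rewrite inS1 // bv.
    by rewrite !inE eqxx.
  + rewrite /x0; case bS: (b \in S); first by rewrite !inE eqxx.
    by rewrite inS1 // ?cv //; apply: (Hc b); rewrite ?bS.
  + by rewrite inS1 // dv.
have [h1 h2 h3] := allN _ h.
exists (x0 |: (S :\ v)); split => //; first exact: H0.
exact: card_swap.
Qed.

Lemma dir2 k : has_vc Gp k -> has_vc e k.
Proof.
case=> S' [HS Hk].
set S0 := val @: S'.
have cS0 : #|S0| = #|S'| := card_imset _ val_inj.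
have vS0 : v \notin S0.
  by apply/imsetP => -[x _ xv]; move: (valP x); rewrite -xv eqxx.
have Hcov : forall x y, x != v -> y != v -> x != y ->
    e x y || Fpair e v a b c d x y -> (x \in S0) || (y \in S0).
  move=> x y xv yv xy h.
  have := HS (exist _ x xv) (exist _ y yv).
  rewrite /Gp /Gprime_rel /= xy h => /(_ isT) /orP[] h'.
    by apply/orP; left; apply/imsetP; exists (exist _ x xv).
  by apply/orP; right; apply/imsetP; exists (exist _ y yv).
have He : forall x y, x != v -> y != v -> e x y -> (x \in S0) || (y \in S0).
  move=> x y xv yv exy; apply: Hcov => //; last by rewrite exy.
  by apply/eqP => h; move: exy; rewrite h eirr.
have Key : forall w, w \in S0 -> (forall y, e w y -> y != v -> y \in S0) -> has_vc e k.
  move=> w wS Hw; exists (v |: (S0 :\ w)); split.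
    move=> x y exy; rewrite !inE.
    case: (eqVneq x v) => [->|xv] //=.
    case: (eqVneq y v) => [->|yv] //=; first by rewrite orbT.
    have/orP[xS|yS] := He x y xv yv exy.
      case: (eqVneq x w) => [xw|xw] /=; last by rewrite xS.
      have yS : y \in S0 by apply: Hw => //; rewrite -xw.
      have yw : y != w by apply: contraTneq exy => ->; rewrite -xw eirr.
      by rewrite yS yw ?orbT.
    case: (eqVneq y w) => [yw|yw] /=; last by rewrite yS orbT.
    have xS : x \in S0 by apply: Hw => //; rewrite -yw esym.
    have xw : x != w by apply: contraTneq exy => ->; rewrite -yw eirr.
    by rewrite xS xw ?orbT.
  apply: int_le_trans Hk; rewrite -cS0 cardsU1 (cardsD1 w S0) wS.
  by rewrite leq_add2r leq_b1.
case Nall: [&& a \in S0, b \in S0, c \in S0 & d \in S0].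
  exists S0; split; last by rewrite cS0.
  have hN : forall z, z \in nbh e v -> z \in S0.
    by move: Nall => /and4P[? ? ? ?] z; rewrite inN; case/or4P => /eqP ->.
  move=> x y exy.
  case: (eqVneq x v) => [xv|xv]; first by rewrite (hN y) ?orbT // -xv inE.
  case: (eqVneq y v) => [yv|yv]; first by rewrite (hN x) // -yv inE esym.
  exact: He.
case abS: ((a \in S0) && (b \in S0)).
  move: abS => /andP[aS bS].
  have [z [zS zN ze]] : exists z, [/\ z \notin S0, z \in [set c; d] & z != v].
    move: Nall; rewrite aS bS /=.
    case cS: (c \in S0) => /= dS.
      by exists d; rewrite dS !inE eqxx orbT dv.
    by exists c; rewrite cS !inE eqxx cv.
  apply: (Key a aS) => y ay yv.
  have zy : z != y.
    apply/eqP => h; move: zN; rewrite h !inE => /orP[]/eqP h'; move: ay; rewrite h'.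
      by rewrite (negbTE Hac).
    by rewrite (negbTE Had).
  have := Hcov z y ze yv zy.
  rewrite (negbTE zS) /=; apply.
  have ay' : y \in nbh e a by rewrite inE.
  by rewrite /Fpair zN ay' !orbT.
have [z [zS zN ze]] : exists z, [/\ z \notin S0, z \in [set a; b] & z != v].
  move: abS; case aS: (a \in S0) => /= bS.
    by exists b; rewrite bS !inE eqxx orbT bv.
  by exists a; rewrite aS !inE eqxx av.
have zd : forall y, y \in nbh e d -> z != y.
  move=> y; rewrite inE => dy; apply/eqP => h; move: zN; rewrite h !inE => /orP[]/eqP h'.
    by move: Had; rewrite -h' esym dy.
  by move: Hbd; rewrite -h' esym dy.
have dS : d \in S0.
  have zd' : z != d.
    by move: zN; rewrite !inE => /orP[]/eqP ->; rewrite ?ne_ad ?ne_bd.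
  have := Hcov z d ze dv zd'.
  rewrite (negbTE zS) /=; apply.
  have va : e v a by have := aN; rewrite inE.
  have vb : e v b by have := bN; rewrite inE.
  have vd : e v d by have := dN; rewrite inE.
  by move: zN; rewrite /Fpair !inE => /orP[]/eqP ->; rewrite ?va ?vb ?vd /= ?orbT.
apply: (Key d dS) => y dy yv.
have := Hcov z y ze yv (zd y _).
rewrite (negbTE zS) /=; apply.
  by rewrite inE.
have dy' : y \in nbh e d by rewrite inE.
by rewrite /Fpair zN dy' !orbT.
Qed.
End VC.

Unset Implicit Arguments.

Theorem proposition7 (T : finType) (e : rel T) (k : int) (v : T) :
  simple_graph e -> condA e -> condB e ->
  #|nbh e v| = 4 -> 3 <= induced_edges e (nbh e v) ->
  is_path_graph_induced e (nbh e v) /\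
  (forall a b c d : T, induced_P4 e (nbh e v) a b c d ->
     (has_vc e k <-> has_vc (Gprime_rel e v a b c d) k)).
Proof.
move=> [esym eirr] hA hB h4 h3; split; first by apply: part1.
move=> a b c d [U HN [ab bc cd] [ac ad bd]]; split.
  by apply: dir1.
by apply: dir2.
Qed.
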